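(* Let $X$ be a continuous random variable with finite support $[a,b]$, and fix a positive integer $m$. For each $n > m$, let $X_1, \dots, X_n$ be i.i.d. samples from $X$ and let $X_{(1)} \le \dots \le X_{(n)}$ denote their order statistics. Then $E[X_{(k+m)} - X_{(k)}] \to 0$ as $n \to \infty$ uniformly for all $1 \le k \le n-m$; that is, for every $\varepsilon > 0$ there exists $N$ such that for all $n > N$ and all $1 \le k \le n-m$, $E[X_{(k+m)} - X_{(k)}] \le \varepsilon$. *)

(* Defs.v *)
From HB Require Import structures.
From mathcomp Require Import all_boot all_order all_algebra.
From mathcomp Require Import all_classical all_reals all_analysis.
Set Implicit Arguments. Unset Strict Implicit. Unset Printing Implicit Defensive.
Import Order.TTheory GRing.Theory Num.Theory.
Local Open Scope classical_set_scope.
Local Open Scope ring_scope.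

(* A law mu on R has no atoms (continuous CDF): "X is a continuous r.v." *)
Definition atomless (R : realType) (mu : probability R R) : Prop :=
  forall x : R, mu [set x] = 0%E.

Definition support_is (R : realType) (mu : probability R R) (a b : R) : Prop :=
  mu [set` `[a, b]] = 1%E /\
  forall x : R, a <= x <= b -> forall e : R, 0 < e -> (0 < mu [set y : R | (x - e < y < x + e)%R])%E.

Definition has_law (R : realType) d (T : measurableType d)
  (P : probability T R) (X : T -> R) (mu : probability R R) : Prop :=
  measurable_fun setT X /\
  forall A : set R, measurable A -> P (X @^-1` A) = mu A.

Definition mutually_independent (R : realType) d (T : measurableType d)
  (P : probability T R) (n : nat) (X : 'I_n -> T -> R) : Prop :=
  forall A : 'I_n -> set R, (forall i, measurable (A i)) ->
    P (\bigcap_(i in [set: 'I_n]) (X i @^-1` A i)) =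
    (\prod_(i < n) P (X i @^-1` A i))%E.

Definition iid_law (R : realType) d (T : measurableType d)
  (P : probability T R) (n : nat) (X : 'I_n -> T -> R) (mu : probability R R)
  : Prop :=
  (forall i, has_law P (X i) mu) /\ mutually_independent P X.

(* k-th order statistic X_(k), 1-based: the k-th smallest of X_1(w),...,X_n(w) *)
Definition order_stat (R : realType) (T : Type) (n : nat)
  (X : 'I_n -> T -> R) (k : nat) (w : T) : R :=
  nth 0 (sort (<=%R) [seq X i w | i <- enum 'I_n]) k.-1.

(* Main.v *)
Require Import Defs.
From HB Require Import structures.
From mathcomp Require Import all_boot all_order all_algebra.
From mathcomp Require Import all_classical all_reals all_analysis.
From mathcomp Require Import measurable_realfun.
From mathcomp Require Import lra zify ring.
Import Order.TTheory GRing.Theory Num.Theory.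
Local Open Scope classical_set_scope.
Local Open Scope ring_scope.
Lemma count_iota_between a b n : (count (fun p => (a <= p < b)%N) (iota 0 n) <= b - a)%N.
Proof.
rewrite -size_filter -(size_iota a (b - a)).
apply: uniq_leq_size; first by rewrite filter_uniq // iota_uniq.
move=> p; rewrite mem_filter mem_iota => /andP[/andP[h1 h2] _].
rewrite mem_iota; apply/andP; split; lia.
Qed.

Lemma count_between (R : realType) (T : Type) n (X : 'I_n -> T -> R) w k m :
 (1 <= k)%N -> (k + m <= n)%N ->
 (count (fun x => (order_stat X k w < x)%R && (x < order_stat X (k+m) w)%R)
    [seq X i w | i <- enum 'I_n] <= m.-1)%N.
Proof.
move=> k1 kmn.
set s0 := [seq X i w | i <- enum 'I_n].
set s := sort <=%R s0.
have ps : perm_eq s s0 by rewrite /s perm_sort perm_refl.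
have sz : size s = n by rewrite (perm_size ps) size_map size_enum_ord.
have so : sorted <=%R s by apply: sort_sorted; exact: le_total.
rewrite -((permP ps) _) /order_stat -/s0 -/s.
set lo := nth 0 s k.-1; set hi := nth 0 s (k + m).-1.
rewrite -[X in count _ X](mkseq_nth 0 s) count_map sz.
have H := count_iota_between k (k + m).-1 n.
have E : ((k + m).-1 - k = m.-1)%N by lia.
rewrite E in H; apply: (leq_trans _ H).
rewrite (@eq_in_count _ _ (fun p => (p < n)%N && ((lo < s`_p) && (s`_p < hi)))); last first.
  by move=> p; rewrite mem_iota /= => ->.
apply: sub_count => p /=; rewrite /preim /= => /andP[pn /andP[h1 h2]].
case: (ltnP p k) => hp.
  have : nth 0 s p <= lo.
    apply: (sorted_leq_nth le_trans le_refl) => //; rewrite ?inE /= ?sz; lia.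
  by rewrite leNgt h1.
rewrite /= ltnNge; apply/negP => hp2.
have : hi <= nth 0 s p.
  apply: (sorted_leq_nth le_trans le_refl) => //; rewrite ?inE /= ?sz //; try lia.
by rewrite leNgt h2.
Qed.
Lemma count_blocks (R : realType) n (v : 'I_n -> R) (Q : pred R) m s :
 (forall b, (b < m)%N -> exists i : 'I_n, (b * s <= i < b * s + s)%N /\ Q (v i)) ->
 (m <= count Q [seq v i | i <- enum 'I_n])%N.
Proof.
move=> H.
have H' : forall b : 'I_m, exists i : 'I_n, (b * s <= i < b * s + s)%N /\ Q (v i).
  by move=> b; apply: H.
have [f hf] := boolp.choice H'.
have finj : injective f.
  move=> b1 b2 e; apply/val_inj => /=.
  have [h1 _] := hf b1; have [h2 _] := hf b2; rewrite e in h1.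
  move: h1 h2; move: (val b1) (val b2) (val (f b2)) => x y z; nia.
rewrite count_map -size_filter.
rewrite -(size_enum_ord m) -(size_map f).
apply: uniq_leq_size; first by rewrite map_inj_uniq ?enum_uniq.
move=> _ /mapP[b _ ->]; rewrite mem_filter mem_enum andbT /=.
by have [_ ->] := hf b.
Qed.
Lemma os_mem (R : realType) (T : Type) n (X : 'I_n -> T -> R) w k :
  (1 <= k <= n)%N -> exists i, order_stat X k w = X i w.
Proof.
move=> /andP[k1 kn].
set s0 := [seq X i w | i <- enum 'I_n].
have ps : perm_eq (sort <=%R s0) s0 by rewrite perm_sort perm_refl.
have sz : size (sort <=%R s0) = n by rewrite (perm_size ps) size_map size_enum_ord.
have : order_stat X k w \in s0.
  rewrite -(perm_mem ps) /order_stat -/s0; apply: mem_nth; rewrite sz; lia.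
by move=> /mapP[i _ ->]; exists i.
Qed.

Lemma gap_small (R : realType) (T : Type) n (X : 'I_n -> T -> R) w k m s a b (δ : R) :
 (1 <= k)%N -> (k + m <= n)%N -> (0 < m)%N -> 0 < δ ->
 (forall i, a <= X i w <= b) ->
 (forall j : nat, a + j.+1%:R * δ <= b -> forall bb, (bb < m)%N ->
    exists i : 'I_n, (bb * s <= i < bb * s + s)%N /\
      (a + j%:R * δ <= X i w <= a + j.+1%:R * δ)) ->
 order_stat X (k + m) w - order_stat X k w <= δ *+ 2.
Proof.
move=> k1 kmn m0 d0 Xab Hc.
rewrite leNgt; apply/negP => gap.
set lo := order_stat X k w; set hi := order_stat X (k + m) w.
have [il hil] : exists i, lo = X i w by apply: os_mem; lia.
have [ih hih] : exists i, hi = X i w by apply: os_mem; lia.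
have /andP[la lb] := Xab il; have /andP[ha hb] := Xab ih.
rewrite -hil in la lb; rewrite -hih in ha hb; rewrite -/lo -/hi in gap.
have x0 : 0 <= (lo - a) / δ by apply: divr_ge0; lra.
have /andP[t1 t2] := truncn_itv x0.
set t := Num.truncn ((lo - a) / δ) in t1 t2.
rewrite ler_pdivlMr // in t1; rewrite ltr_pdivrMr // in t2.
have e1 : t.+1%:R = t%:R + 1 :> R by rewrite -addn1 natrD.
have e2 : t.+2%:R = t%:R + 2 :> R by rewrite -addn2 natrD.
have hj : a + t.+2%:R * δ <= b.
  rewrite e2; rewrite mulr2n in gap; lra.
have := @count_between _ _ _ X w k m k1 kmn.
rewrite -/lo -/hi leqNgt => /negP; apply.
have : (m <= count (fun x => (lo < x)%R && (x < hi)%R) [seq X i w | i <- enum 'I_n])%N.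
  apply: (@count_blocks _ _ _ _ _ s) => bb hbb.
  have [i [hi1 /andP[c1 c2]]] := Hc _ hj bb hbb.
  exists i; split => //; apply/andP; split.
    rewrite e1 in c1; lra.
  rewrite e2 in c2; rewrite mulr2n in gap; lra.
set c := count _ _; lia.
Qed.
Lemma prod_block (R : realType) n bb s (q : R) : (bb * s + s <= n)%N ->
  \prod_(i < n) (if (bb * s <= i < bb * s + s)%N then q else 1) = q ^+ s.
Proof.
move=> h.
rewrite -(big_mkord xpredT (fun i => if (bb * s <= i < bb * s + s)%N then q else 1)).
rewrite (@big_cat_nat _ _ _ (bb * s)) //=; last by nia.
rewrite [X in _ * X](@big_cat_nat _ _ _ (bb * s + s)) //=; last by nia.
rewrite big1_seq; last first.
  move=> i; rewrite mem_iota => /andP[_ /andP[_ hi]]; case: ifP => // /andP[hc1 hc2].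
  exfalso; nia.
rewrite [X in _ * (_ * X)]big1_seq; last first.
  move=> i; rewrite mem_iota => /andP[_ /andP[hi _]]; case: ifP => // /andP[hc1 hc2].
  exfalso; nia.
rewrite (@eq_big_nat _ _ _ _ _ _ (fun _ => q)); last by move=> i ->.
by rewrite prodr_const_nat mul1r mulr1 addKn.
Qed.

Local Open Scope ereal_scope.

Lemma prob_block d (T : measurableType d) (R : realType) (P : probability T R) n
  (X : 'I_n -> T -> R) (mu : probability R R) (C : set R) bb s :
  iid_law P X mu -> measurable C -> (bb * s + s <= n)%N ->
  P (\bigcap_(i in [set: 'I_n]) X i @^-1` (if (bb * s <= i < bb * s + s)%N then ~` C else setT))
   = ((fine (mu (~` C))) ^+ s)%:E.
Proof.
move=> [hl hind] mC h.
rewrite (hind (fun i : 'I_n => if (bb * s <= i < bb * s + s)%N then ~` C else setT)); last first.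
  by move=> i; case: ifP => _; [apply: measurableC|apply: measurableT].
rewrite -(@prod_block R n bb s (fine (mu (~` C))) h) -prodEFin.
apply: eq_bigr => i _; rewrite (hl i).2; last first.
  by case: ifP => _; [apply: measurableC|apply: measurableT].
case: ifP => _; last by rewrite probability_setT.
by rewrite fineK // fin_num_measure //; apply: measurableC.
Qed.

Lemma prob_in d (T : measurableType d) (R : realType) (P : probability T R) n
  (X : 'I_n -> T -> R) (mu : probability R R) (B : set R) :
  iid_law P X mu -> measurable B -> mu B = 1 ->
  P (\bigcap_(i in [set: 'I_n]) X i @^-1` B) = 1.
Proof.
move=> [hl hind] mB h1.
rewrite (hind (fun=> B)) //; rewrite big1 // => i _.
by rewrite (hl i).2.
Qed.
Local Close Scope ereal_scope.

Lemma os_le (R : realType) (T : Type) n (X : 'I_n -> T -> R) w k m :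
  (1 <= k)%N -> (k + m <= n)%N -> order_stat X k w <= order_stat X (k + m) w.
Proof.
move=> k1 kmn.
set s0 := [seq X i w | i <- enum 'I_n].
have ps : perm_eq (sort <=%R s0) s0 by rewrite perm_sort perm_refl.
have sz : size (sort <=%R s0) = n by rewrite (perm_size ps) size_map size_enum_ord.
have so : sorted <=%R (sort <=%R s0) by apply: sort_sorted; exact: le_total.
rewrite /order_stat -/s0.
apply: (sorted_leq_nth le_trans le_refl) => //; rewrite ?inE /= ?sz; lia.
Qed.

Lemma exp_eventually (R : realType) (q η : R) : 0 <= q < 1 -> 0 < η ->
  exists N, forall s, (N <= s)%N -> q ^+ s <= η.
Proof.
move=> /andP[q0 q1] e0.
have hq : `|q| < 1 by rewrite ger0_norm.
have := cvg_expr hq; move/cvgrPdist_le => /(_ η e0) [N _ HN].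
exists N => s hs; have := HN s hs; rewrite /= sub0r normrN ger0_norm //.
exact: exprn_ge0.
Qed.

Lemma meas_bigcap_pre d (T : measurableType d) (R : realType) n (X : 'I_n -> T -> R)
  (A : 'I_n -> set R) : (forall i, measurable_fun setT (X i)) ->
  (forall i, measurable (A i)) ->
  measurable (\bigcap_(i in [set: 'I_n]) X i @^-1` A i).
Proof.
move=> mX mA; apply: fin_bigcap_measurable; first exact: finite_finset.
by move=> i _; rewrite -(setTI (X i @^-1` A i)); exact: mX.
Qed.

Local Open Scope ereal_scope.
Lemma le_int_ge0 d (T : measurableType d) (R : realType) (mu : {measure set T -> \bar R}) (f g : T -> \bar R) :
  (forall x, (0 <= f x)%E) -> (forall x, (f x <= g x)%E) ->
  (\int[mu]_x f x <= \int[mu]_x g x)%E.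
Proof.
move=> f0 fg.
have g0 x : (0 <= g x)%E by apply: le_trans (fg x).
rewrite /integral !patch_setT.
have -> : f^\- = cst 0%E by apply/funext => x; rewrite (@ge0_funenegE _ _ setT)// ?in_setT// => y _; exact: f0.
have -> : g^\- = cst 0%E by apply/funext => x; rewrite (@ge0_funenegE _ _ setT)// ?in_setT// => y _; exact: g0.
have -> : f^\+ = f by apply/funext => x; rewrite (@ge0_funeposE _ _ setT)// ?in_setT// => y _; exact: f0.
have -> : g^\+ = g by apply/funext => x; rewrite (@ge0_funeposE _ _ setT)// ?in_setT// => y _; exact: g0.
apply: leeB => //; apply: ereal_sup_le => _ [h hf <-]; exists h => //= x.
exact: le_trans (hf x) (fg x).
Qed.
Local Close Scope ereal_scope.

Theorem corollary1 (R : realType) (mu : probability R R) (a b : R)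
  (m : nat) :
  atomless mu -> support_is mu a b -> (0 < m)%N ->
  forall eps : R, 0 < eps ->
  exists N : nat, forall n : nat, (N < n)%N -> (m < n)%N ->
    forall (d : measure_display) (T : measurableType d) (P : probability T R)
           (X : 'I_n -> T -> R),
      iid_law P X mu ->
      forall k : nat, (1 <= k)%N -> (k <= n - m)%N ->
        (\int[P]_w ((order_stat X (k + m) w - order_stat X k w)%:E)
           <= eps%:E)%E.
Proof.
move=> _ [hab1 hsupp] m0 eps eps0.
have ab : a <= b.
  rewrite leNgt; apply/negP => ba; move: hab1.
  have -> : [set` `[a, b]] = set0 :> set R.
    by apply/seteqP; split => x //=; rewrite in_itv /= => /andP[h1 h2]; lra.
  by rewrite measure0 => /(f_equal fine) /= /eqP; rewrite eq_sym oner_eq0.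
pose δ := eps / 4.
have d0 : 0 < δ by rewrite divr_gt0.
pose L := Num.truncn ((b - a) / δ).
pose C (j : nat) : set R := [set` `[a + j%:R * δ, a + j.+1%:R * δ]].
have mC j : measurable (C j) by exact: measurable_itv.
pose q (j : nat) := fine (mu (~` C j)).
have eS j : j.+1%:R = j%:R + 1 :> R by rewrite -addn1 natrD.
have hL j : (j < L)%N -> a + j.+1%:R * δ <= b.
  move=> jL; have : (j.+1 <= L)%N by [].
  rewrite truncn_ge_nat; last by apply: divr_ge0; lra.
  by rewrite ler_pdivlMr // => h; lra.
have q01 j : (j < L)%N -> 0 <= q j < 1.
  move=> jL.
  have hb := hL j jL.
  have j0 : 0 <= j%:R :> R by exact: ler0n.
  have fC : mu (C j) = (fine (mu (C j)))%:E by rewrite fineK // fin_num_measure.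
  have pos : (0 < mu (C j))%E.
    have x_in : a <= a + j%:R * δ + δ / 2 <= b.
      by apply/andP; split; rewrite eS in hb; nra.
    have := hsupp _ x_in (δ / 2) (divr_gt0 d0 (ltr0Sn _ _)).
    move=> h; apply: lt_le_trans h _; apply: le_measure.
    - rewrite inE.
      have -> : [set y | a + j%:R * δ + δ / 2 - δ / 2 < y < a + j%:R * δ + δ / 2 + δ / 2]
         = [set` `]a + j%:R * δ + δ / 2 - δ / 2, a + j%:R * δ + δ / 2 + δ / 2[] :> set R.
        by apply/seteqP; split => y; rewrite /= in_itv.
      exact: measurable_itv.
    - by rewrite inE.
    - move=> y /= /andP[y1 y2]; rewrite /C /= in_itv /= eS; apply/andP; split; lra.
  have le1 : (mu (C j) <= 1)%E by apply: probability_le1.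
  rewrite /q probability_setC // fC -EFinB /=.
  rewrite fC lte_fin in pos; rewrite fC lee_fin in le1.
  by apply/andP; split; lra.
pose K := (b - a) * (L * m)%:R.
have K0 : 0 <= K by apply: mulr_ge0; [lra | exact: ler0n].
pose η := eps / 2 / (K + 1).
have η0 : 0 < η by rewrite !divr_gt0 //; lra.
have Kη : (K + 1) * η = eps / 2.
  by rewrite /η mulrC divfK //; apply: lt0r_neq0; lra.
have hN : forall j, exists N, (j < L)%N -> forall s, (N <= s)%N -> q j ^+ s <= η.
  move=> j; case: (ltnP j L) => jL.
    by have [N hN] := @exp_eventually R (q j) η (q01 j jL) η0; exists N.
  by exists 0%N => h; exfalso; lia.
have [Nf hNf] := boolp.choice hN.
pose N0 := (\max_(j < L) Nf j)%N.
exists (m * N0)%N => n hn hmn d T P X hiid k k1 kkm.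
have kmn : (k + m <= n)%N by lia.
pose s := (n %/ m)%N.
have sN0 : (N0 <= s)%N by rewrite leq_divRL // mulnC; lia.
have ms : (m * s <= n)%N by rewrite mulnC leq_divM.
have hs j : (j < L)%N -> q j ^+ s <= η.
  move=> jL; apply: (hNf j jL); apply: leq_trans _ sN0.
  exact: (@leq_bigmax _ (fun j : 'I_L => Nf j) (Ordinal jL)).
have [hl hind] := hiid.
have mX i : measurable_fun setT (X i) := (hl i).1.
pose E (j bb : nat) := \bigcap_(i in [set: 'I_n]) X i @^-1`
   (if (bb * s <= i < bb * s + s)%N then ~` C j else setT).
have mE j bb : measurable (E j bb).
  apply: meas_bigcap_pre => // i; case: ifP => _; [exact: measurableC | exact: measurableT].
have PE j bb : (j < L)%N -> (bb < m)%N -> (P (E j bb) <= η%:E)%E.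
  move=> jL bbm; rewrite /E (@prob_block _ _ _ P n X mu (C j) bb s hiid (mC j)); last by nia.
  rewrite lee_fin; exact: hs.
pose F j := \big[setU/set0]_(bb < m) E j bb.
have mF j : measurable (F j) by apply: bigsetU_measurable => bb _; exact: mE.
pose Bad := \big[setU/set0]_(j < L) F j.
have mBad : measurable Bad by apply: bigsetU_measurable => j _; exact: mF.
have PF j : (j < L)%N -> (P (F j) <= (m%:R * η)%:E)%E.
  move=> jL.
  have H := @content_subadditive _ _ _ P (F j) (fun k => E j k) m (fun k _ => mE j k) (mF j) (@subset_refl _ _).
  apply: (le_trans H).
  apply: (le_trans (lee_sum _ (fun (bb : 'I_m) _ => PE j bb jL (ltn_ord bb)))).
  by rewrite sumEFin sumr_const card_ord mulr_natl.
have PBad : (P Bad <= ((L * m)%:R * η)%:E)%E.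
  have H := @content_subadditive _ _ _ P Bad F L (fun k _ => mF k) mBad (@subset_refl _ _).
  apply: (le_trans H).
  apply: (le_trans (lee_sum _ (fun (j : 'I_L) _ => PF j (ltn_ord j)))).
  rewrite sumEFin sumr_const card_ord natrM.
  by rewrite lee_fin -[(_ * η) *+ L]mulr_natl mulrA.
pose In := \bigcap_(i in [set: 'I_n]) X i @^-1` [set` `[a, b]].
have mIn : measurable In by apply: meas_bigcap_pre => // i; exact: measurable_itv.
pose Out := ~` In.
have mOut : measurable Out by exact: measurableC.
have POut : P Out = 0%E.
  by rewrite probability_setC // (@prob_in _ _ _ P n X mu _ hiid) ?subee //; exact: measurable_itv.
pose h3 : T -> \bar R := fun w => (+oo * (\1_Out w)%:E)%E.
have mh3 : measurable_fun [set: T] (h3 : T -> \bar R).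
  apply: (@emeasurable_funM _ _ _ _ (cst +oo%E) (EFin \o \1_Out)) => //.
  by apply/measurable_EFinP; exact: measurable_indic.
have h30 w : (0 <= h3 w)%E by rewrite /h3 mule_ge0 // lee_fin.
have Ih3 : (\int[P]_w h3 w = 0)%E.
  rewrite (ae_eq_integral (cst 0%E)) //; first exact: integral0.
  exists Out; split => // w /= hw; apply: boolp.contrapT => nO; apply: hw => _.
  by rewrite /h3 indicE memNset // mule0.
pose g := fun w => ((δ *+ 2)%:E + (((b - a)%:E * (\1_Bad w)%:E) + h3 w))%E.
have Ig : (\int[P]_w g w = (δ *+ 2)%:E + (b - a)%:E * P Bad)%E.
  rewrite ge0_integralD //.
  - rewrite integral_cst //; set z := (_ *  P _)%E; have -> : z = (δ *+ 2)%:E by rewrite /z probability_setT mule1.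
    congr (_ + _)%E.
    rewrite ge0_integralD //.
    + rewrite Ih3 adde0 ge0_integralZl_EFin //; last by lra.
      * by rewrite integral_indic // setIT.
      * by apply/measurable_EFinP; exact: measurable_indic.
    + by move=> w _; rewrite mule_ge0 // lee_fin; lra.
    + apply: emeasurable_funM => //; apply/measurable_EFinP; exact: measurable_indic.
  - by move=> w _; rewrite lee_fin mulrn_wge0 // ltW.
  - by move=> w _; rewrite adde_ge0 // mule_ge0 // lee_fin; lra.
  - apply: emeasurable_funD => //; apply: emeasurable_funM => //.
    by apply/measurable_EFinP; exact: measurable_indic.
have I1 : (\int[P]_w ((order_stat X (k + m) w - order_stat X k w)%:E) <= \int[P]_w g w)%E.
  apply: le_int_ge0 => w.
    by rewrite lee_fin subr_ge0; exact: os_le.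
  rewrite /g.
  case: (boolp.pselect (Out w)) => ho.
    rewrite /h3 [\1_Out w]indicE mem_set //= mule1 -EFinM /=; exact: leey.
  have hin : In w by apply: boolp.contrapT.
  have Xab i : a <= X i w <= b by have := hin i I; rewrite /= in_itv.
  rewrite /h3 [\1_Out w]indicE memNset //= mule0 adde0.
  case: (boolp.pselect (Bad w)) => hbad.
    rewrite indicE mem_set //= mule1 -EFinD lee_fin.
    have [il hil] : exists i, order_stat X k w = X i w by apply: os_mem; lia.
    have [ih hih] : exists i, order_stat X (k + m) w = X i w by apply: os_mem; lia.
    rewrite hil hih; have := Xab il; have := Xab ih; rewrite mulr2n; lra.
  rewrite indicE memNset //= mule0 adde0 lee_fin.
  apply: (@gap_small R T n X w k m s a b δ k1 kmn m0 d0 Xab).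
  move=> j hj bb bbm.
  have jL : (j < L)%N.
    have : (j.+1 <= L)%N; last by [].
    rewrite /L truncn_ge_nat; last by apply: divr_ge0; lra.
    by rewrite ler_pdivlMr //; lra.
  have nE : ~ E j bb w.
    move=> hE; apply: hbad; rewrite /Bad -bigcup_mkord; exists j => //.
    by rewrite /F -bigcup_mkord; exists bb.
  apply: boolp.contrapT => hne; apply: nE => i _ /=.
  case: ifP => hb //.
  move=> hc; apply: hne; exists i; split => //; move: hc; rewrite /C /= in_itv /=.
apply: (le_trans I1).
rewrite Ig.
apply: (@le_trans _ _ ((δ *+ 2)%:E + (b - a)%:E * ((L * m)%:R * η)%:E)%E).
  apply: leeD2l; apply: lee_pmul => //; rewrite lee_fin; lra.
rewrite -EFinM -EFinD lee_fin mulrA -/K /δ mulr2n.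
have : 0 < η by [].
lra.
Qed.
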